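(* Let $\sigma$ be a finite sequence of transitions. Then $\sigma$ is $\omega$-iterable if and only if for every $n\ge 1$ the $n$-fold concatenation $\sigma^n=\sigma\sigma\cdots\sigma$ has an execution (from some valuation).
   Context: Fix a finite set of clocks $X=\{x_0,x_1,\dots,x_m\}$, where $x_0$ is a special reference clock. A valuation is a map $v:X\to\mathbb{R}_{\ge 0}$ with $v(x_0)=0$. For $\delta\ge 0$, $v+\delta$ is the valuation adding $\delta$ to every clock other than $x_0$; for $R\subseteq X\setminus\{x_0\}$, $[R]v$ sets the clocks of $R$ to $0$ and leaves the others unchanged. A guard is a conjunction of atomic constraints $x\sim c$ with $x\in X\setminus\{x_0\}$, $\sim\in\{<,\le,=,\ge,>\}$, $c\in\mathbb{N}$. A transition $t$ is a pair $(g,R)$ of a guard $g$ and a reset set $R\subseteq X\setminus\{x_0\}$ (control states are omitted). We write $v\xrightarrow{t}^{\delta}v'$ if $v+\delta\models g$ and $v'=[R](v+\delta)$. An execution of a sequence $\sigma=t_1\cdots t_k$ is a sequence of valuations $v_0,\dots,v_k$ such that there are $\delta_1,\dots,\delta_k\ge 0$ with $v_{i-1}\xrightarrow{t_i}^{\delta_i}v_i$ for all $i$; we then write $v_0\xrightarrow{\sigma}^{\delta}v_k$ with $\delta=\sum_i\delta_i$, and say $\sigma$ is executable from $v_0$. The sequence $\sigma$ is $\omega$-iterable (from $v_0$) if there are infinite sequences of valuations $v_0,v_1,\dots$ and delays $\delta_1,\delta_2,\dots$ with $v_0\xrightarrow{\sigma}^{\delta_1}v_1\xrightarrow{\sigma}^{\delta_2}v_2\cdots$.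 *)

(* Defs.v *)
From Stdlib Require Import Reals List Arith.
Import ListNotations.
Open Scope R_scope.

(* Clocks X = {x_0, ..., x_m}, represented as naturals <= m; x_0 is index 0. *)
Definition clock (m : nat) : Type := { x : nat | (x <= m)%nat }.

Definition is_ref {m : nat} (x : clock m) : bool := Nat.eqb (proj1_sig x) 0.

Definition valuation (m : nat) : Type := clock m -> R.

Definition valid_val {m : nat} (v : valuation m) : Prop :=
  (forall x : clock m, 0 <= v x) /\ (forall x : clock m, is_ref x = true -> v x = 0).

Definition delay {m : nat} (v : valuation m) (d : R) : valuation m :=
  fun x => if is_ref x then v x else v x + d.

Definition reset {m : nat} (Rs : clock m -> bool) (v : valuation m) : valuation m :=
  fun x => if Rs x then 0 else v x.

Inductive cmp : Type := CLt | CLe | CEq | CGe | CGt.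

Definition cmp_sem (c : cmp) (a b : R) : Prop :=
  match c with
  | CLt => a < b | CLe => a <= b | CEq => a = b | CGe => a >= b | CGt => a > b
  end.

Record atom (m : nat) : Type := mkAtom { a_clock : clock m; a_cmp : cmp; a_const : nat }.
Arguments a_clock {m}. Arguments a_cmp {m}. Arguments a_const {m}.

Definition guard (m : nat) : Type := list (atom m).

Definition sat_atom {m : nat} (v : valuation m) (a : atom m) : Prop :=
  cmp_sem (a_cmp a) (v (a_clock a)) (INR (a_const a)).

Definition sat_guard {m : nat} (v : valuation m) (g : guard m) : Prop :=
  Forall (sat_atom v) g.

Record transition (m : nat) : Type := mkTrans { t_guard : guard m; t_reset : clock m -> bool }.
Arguments t_guard {m}. Arguments t_reset {m}.

Definition wf_trans {m : nat} (t : transition m) : Prop :=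
  Forall (fun a => is_ref (a_clock a) = false) (t_guard t) /\
  (forall x : clock m, is_ref x = true -> t_reset t x = false).

Definition step {m : nat} (v : valuation m) (t : transition m) (d : R) (v' : valuation m) : Prop :=
  0 <= d /\ sat_guard (delay v d) (t_guard t) /\ v' = reset (t_reset t) (delay v d).

Inductive exec {m : nat} : valuation m -> list (transition m) -> R -> valuation m -> Prop :=
  | exec_nil : forall v, exec v [] 0 v
  | exec_cons : forall v t s d d' v1 v2,
      step v t d v1 -> exec v1 s d' v2 -> exec v (t :: s) (d + d') v2.

Definition executable_from {m : nat} (s : list (transition m)) (v0 : valuation m) : Prop :=
  valid_val v0 /\ exists d v', exec v0 s d v'.

Definition omega_iterable_from {m : nat} (s : list (transition m)) (v0 : valuation m) : Prop :=
  valid_val v0 /\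
  exists (vs : nat -> valuation m) (ds : nat -> R),
    vs 0%nat = v0 /\ forall i : nat, exec (vs i) s (ds (S i)) (vs (S i)).

Definition omega_iterable {m : nat} (s : list (transition m)) : Prop :=
  exists v0, omega_iterable_from s v0.

Definition seq_pow {m : nat} (s : list (transition m)) (n : nat) : list (transition m) :=
  concat (repeat s n).

(* Main.v *)
Require Import Defs.
From Stdlib Require Import Reals List Arith Lia Lra ClassicalEpsilon Classical.
Import ListNotations.
Open Scope R_scope.

Module Part1.

Lemma list_max_ex (l : list R) : l = [] \/ exists x, In x l /\ forall y, In y l -> y <= x.
Proof.
  induction l as [|a l IH]; [left; reflexivity|right].
  destruct IH as [->|[x [Hx Hmx]]].
  - exists a; split; [left; reflexivity|]. intros y [<-|[]]; lra.
  - destruct (Rle_dec a x).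
    + exists x; split; [right; exact Hx|]. intros y [<-|Hy]; [lra|auto].
    + exists a; split; [left; reflexivity|]. intros y [<-|Hy]; [lra|]. specialize (Hmx y Hy); lra.
Qed.

Lemma list_min_ex (l : list R) : l = [] \/ exists x, In x l /\ forall y, In y l -> x <= y.
Proof.
  induction l as [|a l IH]; [left; reflexivity|right].
  destruct IH as [->|[x [Hx Hmx]]].
  - exists a; split; [left; reflexivity|]. intros y [<-|[]]; lra.
  - destruct (Rle_dec x a).
    + exists x; split; [right; exact Hx|]. intros y [<-|Hy]; [lra|auto].
    + exists a; split; [left; reflexivity|]. intros y [<-|Hy]; [lra|]. specialize (Hmx y Hy); lra.
Qed.

Lemma interp {I : Type} (L : list I) (p q : I -> R) (d : R) :
  (forall i j, In i L -> In j L -> (p i < p j <-> q i < q j)) ->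
  exists d', forall i, In i L -> (d < p i <-> d' < q i) /\ (p i < d <-> q i < d').
Proof.
  intros Hiso.
  destruct (classic (exists k, In k L /\ p k = d)) as [[k [Hk Hpk]]|Hno].
  - exists (q k). intros i Hi; subst d; split; apply Hiso; auto.
  - set (Lb := filter (fun i => if Rlt_dec (p i) d then true else false) L).
    set (Lh := filter (fun i => if Rlt_dec d (p i) then true else false) L).
    assert (HLb : forall i, In i Lb <-> In i L /\ p i < d).
    { intro i; unfold Lb; rewrite filter_In. destruct (Rlt_dec (p i) d); intuition discriminate. }
    assert (HLh : forall i, In i Lh <-> In i L /\ d < p i).
    { intro i; unfold Lh; rewrite filter_In. destruct (Rlt_dec d (p i)); intuition discriminate. }
    assert (Htot : forall i, In i L -> p i < d \/ d < p i).
    { intros i Hi. destruct (Rtotal_order (p i) d) as [h|[h|h]]; auto.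
      exfalso; apply Hno; eauto. }
    assert (Hbh : forall i j, In i Lb -> In j Lh -> q i < q j).
    { intros i j Hi Hj. apply HLb in Hi; apply HLh in Hj. apply Hiso; try tauto. lra. }
    destruct (list_max_ex (map q Lb)) as [Eb|[lo [Hlo Hmlo]]];
    destruct (list_min_ex (map q Lh)) as [Eh|[hi [Hhi Hmhi]]].
    + exists 0. intros i Hi. exfalso. destruct (Htot i Hi) as [h|h].
      * assert (In (q i) (map q Lb)) by (apply in_map, HLb; auto). rewrite Eb in H; destruct H.
      * assert (In (q i) (map q Lh)) by (apply in_map, HLh; auto). rewrite Eh in H; destruct H.
    + exists (hi - 1). intros i Hi. destruct (Htot i Hi) as [h|h].
      * exfalso. assert (In (q i) (map q Lb)) by (apply in_map, HLb; auto). rewrite Eb in H; destruct H.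
      * assert (hi <= q i) by (apply Hmhi, in_map, HLh; auto). split; split; intro; lra.
    + exists (lo + 1). intros i Hi. destruct (Htot i Hi) as [h|h].
      * assert (q i <= lo) by (apply Hmlo, in_map, HLb; auto). split; split; intro; lra.
      * exfalso. assert (In (q i) (map q Lh)) by (apply in_map, HLh; auto). rewrite Eh in H; destruct H.
    + assert (lo < hi).
      { apply in_map_iff in Hlo as [i [<- Hi]]. apply in_map_iff in Hhi as [j [<- Hj]]. auto. }
      exists ((lo + hi)/2). intros i Hi. destruct (Htot i Hi) as [h|h].
      * assert (q i <= lo) by (apply Hmlo, in_map, HLb; auto). split; split; intro; lra.
      * assert (hi <= q i) by (apply Hmhi, in_map, HLh; auto). split; split; intro; lra.
Qed.

Lemma nodup_map_seq {T} (g : nat -> T) a k :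
  (forall i j, (a <= i)%nat -> (i < j)%nat -> (j < a + k)%nat -> g i <> g j) ->
  NoDup (map g (seq a k)).
Proof.
  revert a; induction k as [|k IH]; intros a H; simpl; constructor.
  - intro Hin. apply in_map_iff in Hin as [j [Hj Hin]]. apply in_seq in Hin.
    apply (H a j); lia || auto.
  - apply IH. intros i j Hi Hij Hj. apply H; lia.
Qed.

Lemma php {T} (D : list T) (g : nat -> T) :
  (forall i, (i <= length D)%nat -> In (g i) D) ->
  exists i j, (i < j)%nat /\ (j <= length D)%nat /\ g i = g j.
Proof.
  intros HD. apply NNPP. intro Hn.
  assert (Hnd : NoDup (map g (seq 0 (S (length D))))).
  { apply nodup_map_seq. intros i j _ Hij Hj Heq. apply Hn. exists i, j; repeat split; auto; lia. }
  assert (Hinc : incl (map g (seq 0 (S (length D)))) D).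
  { intros x Hx. apply in_map_iff in Hx as [i [<- Hi]]. apply in_seq in Hi. apply HD; lia. }
  pose proof (NoDup_incl_length Hnd Hinc) as Hl. rewrite length_map, length_seq in Hl. lia.
Qed.

Fixpoint allb (n : nat) : list (list bool) :=
  match n with
  | O => [[]]
  | S n => map (cons true) (allb n) ++ map (cons false) (allb n)
  end.

Lemma allb_in (l : list bool) : In l (allb (length l)).
Proof.
  induction l as [|b l IH]; simpl; [left; reflexivity|].
  apply in_or_app. destruct b; [left|right]; apply in_map; exact IH.
Qed.

Lemma exec_app {m} (v : valuation m) s1 s2 d w :
  exec v (s1 ++ s2) d w -> exists d1 d2 u, exec v s1 d1 u /\ exec u s2 d2 w.
Proof.
  revert v d; induction s1 as [|t s1 IH]; intros v d H; simpl in H.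
  - exists 0, d, v; split; [constructor|exact H].
  - inversion H; subst. destruct (IH _ _ H6) as [d1 [d2 [u [H1 H2]]]].
    exists (d0 + d1), d2, u; split; [econstructor; eauto|exact H2].
Qed.

Lemma exec_app2 {m} (v u w : valuation m) s1 s2 d1 d2 :
  exec v s1 d1 u -> exec u s2 d2 w -> exists d, exec v (s1 ++ s2) d w.
Proof.
  intros H1; revert d2; induction H1; intros d2 H2; simpl.
  - eauto.
  - destruct (IHexec _ H2) as [dd Hd]. eexists; econstructor; eauto.
Qed.

End Part1.
Import Part1.

Module Part2.

Section S.
Context {m : nat} (K : nat).

Definition val (v : valuation m) (a : nat) : R :=
  match le_dec a m with left H => v (exist _ a H) | right _ => 0 end.

Lemma val_ex v a (H : (a <= m)%nat) : val v a = v (exist _ a H).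
Proof. unfold val; destruct (le_dec a m) as [H'|n]; [do 2 f_equal; apply le_unique|contradiction]. Qed.

Lemma val_clock v (x : clock m) : v x = val v (proj1_sig x).
Proof. destruct x as [a H]; simpl; symmetry; apply val_ex. Qed.

Lemma val_delay v d a : (1 <= a <= m)%nat -> val (delay v d) a = val v a + d.
Proof.
  intros Ha. rewrite !(val_ex _ _ (proj2 Ha)). unfold delay, is_ref; simpl.
  destruct a; [lia|reflexivity].
Qed.

Inductive test := T1 (a c : nat) | T2 (a c : nat) | T3 (a b c : nat) | T4 (a b c : nat).

Definition evalP (v : valuation m) (t : test) : Prop :=
  match t with
  | T1 a c => val v a < INR c
  | T2 a c => val v a <= INR c
  | T3 a b c => val v a <= INR K /\ val v b <= INR K /\ val v a - val v b < INR c
  | T4 a b c => val v a <= INR K /\ val v b <= INR K /\ val v a - val v b <= INR c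
  end.

Definition idx := seq 1 m.
Definition cs := seq 0 (S K).
Definition tests : list test :=
  flat_map (fun a => flat_map (fun c => T1 a c :: T2 a c ::
     flat_map (fun b => [T3 a b c; T4 a b c]) idx) cs) idx.

Definition tinv (t : test) : Prop :=
  match t with
  | T1 a c | T2 a c => (1 <= a <= m)%nat /\ (c <= K)%nat
  | T3 a b c | T4 a b c => (1 <= a <= m)%nat /\ (1 <= b <= m)%nat /\ (c <= K)%nat
  end.

Lemma tests_inv t : In t tests -> tinv t.
Proof.
  unfold tests. intros H. apply in_flat_map in H as [a [Ha H]].
  apply in_flat_map in H as [c [Hc H]]. unfold idx, cs in *. apply in_seq in Ha, Hc.
  destruct H as [<-|[<-|H]]; simpl; try lia.
  apply in_flat_map in H as [b [Hb H]]. apply in_seq in Hb.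
  destruct H as [<-|[<-|[]]]; simpl; lia.
Qed.

Lemma tests_in t : tinv t -> In t tests.
Proof.
  intros H. unfold tests. destruct t as [a c|a c|a b c|a b c]; simpl in H;
  apply in_flat_map; exists a; (split; [apply in_seq; lia|]);
  apply in_flat_map; exists c; (split; [apply in_seq; lia|]).
  - left; reflexivity.
  - right; left; reflexivity.
  - right; right; apply in_flat_map; exists b; split; [apply in_seq; lia|]; left; reflexivity.
  - right; right; apply in_flat_map; exists b; split; [apply in_seq; lia|]; right; left; reflexivity.
Qed.

Definition equiv (v w : valuation m) : Prop :=
  forall t, In t tests -> (evalP v t <-> evalP w t).

Lemma equiv_refl v : equiv v v.  Proof. intros t _; tauto. Qed.
Lemma equiv_sym v w : equiv v w -> equiv w v.
Proof. intros H t Ht; specialize (H t Ht); tauto. Qed.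
Lemma equiv_trans u v w : equiv u v -> equiv v w -> equiv u w.
Proof. intros H1 H2 t Ht; specialize (H1 t Ht); specialize (H2 t Ht); tauto. Qed.

Definition evalb v t : bool := if excluded_middle_informative (evalP v t) then true else false.
Definition alpha v : list bool := map (evalb v) tests.

Lemma alpha_equiv v w : alpha v = alpha w -> equiv v w.
Proof.
  unfold alpha, equiv. generalize tests. intros l; induction l as [|t l IH]; simpl; intros H t' Ht'.
  - destruct Ht'.
  - injection H as H1 H2. destruct Ht' as [<-|Ht']; [|apply IH; auto].
    unfold evalb in H1. destruct (excluded_middle_informative (evalP v t));
    destruct (excluded_middle_informative (evalP w t)); try discriminate; tauto.
Qed.

Lemma alpha_in v : In (alpha v) (allb (length tests)).
Proof. replace (length tests) with (length (alpha v)) by (unfold alpha; apply length_map). apply allb_in. Qed.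

Definition nonneg (v : valuation m) := forall a, (1 <= a <= m)%nat -> 0 <= val v a.

Section E.
Variables v w : valuation m.
Hypothesis He : equiv v w.
Lemma E1 a c : (1 <= a <= m)%nat -> (c <= K)%nat -> (val v a < INR c <-> val w a < INR c).
Proof. intros; apply (He (T1 a c)), tests_in; simpl; auto. Qed.
Lemma E2 a c : (1 <= a <= m)%nat -> (c <= K)%nat -> (val v a <= INR c <-> val w a <= INR c).
Proof. intros; apply (He (T2 a c)), tests_in; simpl; auto. Qed.
Lemma E3 a b c : (1 <= a <= m)%nat -> (1 <= b <= m)%nat -> (c <= K)%nat ->
  (val v a <= INR K /\ val v b <= INR K /\ val v a - val v b < INR c <->
   val w a <= INR K /\ val w b <= INR K /\ val w a - val w b < INR c).
Proof. intros; apply (He (T3 a b c)), tests_in; simpl; auto. Qed.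
Lemma E4 a b c : (1 <= a <= m)%nat -> (1 <= b <= m)%nat -> (c <= K)%nat ->
  (val v a <= INR K /\ val v b <= INR K /\ val v a - val v b <= INR c <->
   val w a <= INR K /\ val w b <= INR K /\ val w a - val w b <= INR c).
Proof. intros; apply (He (T4 a b c)), tests_in; simpl; auto. Qed.
Lemma equiv_nonneg : nonneg v -> nonneg w.
Proof. intros Hn a Ha. pose proof (Hn a Ha). destruct (Rlt_dec (val w a) 0) as [h|h]; [|lra].
  exfalso. apply (E1 a 0) in h; auto; [simpl in h; lra|lia]. Qed.
End E.

End S.

End Part2.
Import Part2.

Module Part3.

Section S.
Context {m : nat} (K : nat).

Lemma delay_sim (v w : valuation m) d :
  equiv K v w -> 0 <= d -> exists d', 0 <= d' /\ equiv K (delay v d) (delay w d').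
Proof.
  intros He Hd.
  set (rel := filter (fun ac => if Rle_dec (val v (fst ac)) (INR (snd ac)) then true else false)
                     (list_prod (@idx m) (cs K))).
  set (L := None :: map Some rel).
  assert (HL : forall a c, In (Some (a,c)) L -> (1 <= a <= m)%nat /\ (c <= K)%nat /\ val v a <= INR c).
  { intros a c H. destruct H as [H|H]; [discriminate|].
    apply in_map_iff in H as [[a' c'] [E H]]. injection E as -> ->.
    unfold rel in H; apply filter_In in H as [H1 H2]. apply in_prod_iff in H1 as [Ha Hc].
    unfold idx, cs in *; apply in_seq in Ha, Hc. simpl in H2.
    destruct (Rle_dec (val v a) (INR c)); [|discriminate]. repeat split; lia || auto. }
  assert (HL2 : forall a c, (1 <= a <= m)%nat -> (c <= K)%nat -> val v a <= INR c -> In (Some (a,c)) L).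
  { intros a c Ha Hc Hv. right. apply in_map. unfold rel. apply filter_In. split.
    - apply in_prod_iff; unfold idx, cs; split; apply in_seq; lia.
    - simpl. destruct (Rle_dec (val v a) (INR c)); auto. }
  set (p := fun o : option (nat*nat) => match o with None => 0 | Some (a,c) => INR c - val v a end).
  set (q := fun o : option (nat*nat) => match o with None => 0 | Some (a,c) => INR c - val w a end).
  assert (HK : forall c, (c <= K)%nat -> INR c <= INR K) by (intros; apply le_INR; auto).
  assert (Hiso : forall i j, In i L -> In j L -> (p i < p j <-> q i < q j)).
  { intros [[a c]|] [[b c']|] Hi Hj; simpl.
    - destruct (HL _ _ Hi) as [Ha [Hc Hva]]. destruct (HL _ _ Hj) as [Hb [Hc' Hvb]].
      pose proof (proj1 (E2 _ _ _ He a c Ha Hc) Hva) as Hwa.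
      pose proof (proj1 (E2 _ _ _ He b c' Hb Hc') Hvb) as Hwb.
      pose proof (HK c Hc). pose proof (HK c' Hc').
      destruct (le_lt_dec c c') as [Hle|Hlt].
      + pose proof (E3 _ _ _ He b a (c' - c) Hb Ha ltac:(lia)) as H3.
        rewrite minus_INR in H3 by auto.
        split; intro; [assert (X: val v b <= INR K /\ val v a <= INR K /\ val v b - val v a < INR c' - INR c) by (repeat split; lra)
                      |assert (X: val w b <= INR K /\ val w a <= INR K /\ val w b - val w a < INR c' - INR c) by (repeat split; lra)];
        apply H3 in X; lra.
      + pose proof (E4 _ _ _ He a b (c - c') Ha Hb ltac:(lia)) as H4.
        rewrite minus_INR in H4 by lia.
        split; intro Hlt'; destruct (Rle_dec (val v a - val v b) (INR c - INR c')) as [h|h];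
          destruct (Rle_dec (val w a - val w b) (INR c - INR c')) as [h'|h']; try lra;
          exfalso; first [apply h'; apply H4 | apply h; apply H4]; repeat split; lra.
    - destruct (HL _ _ Hi) as [Ha [Hc Hva]].
      pose proof (proj1 (E2 _ _ _ He a c Ha Hc) Hva). split; intro; lra.
    - destruct (HL _ _ Hj) as [Ha [Hc Hva]].
      pose proof (Part2.E1 _ _ _ He b c' Ha Hc) as H1. split; intro.
      + assert (val v b < INR c') as X by lra. apply H1 in X; lra.
      + assert (val w b < INR c') as X by lra. apply H1 in X; lra.
    - tauto. }
  destruct (interp L p q d Hiso) as [d' Hd'].
  assert (Hd0 : 0 <= d').
  { destruct (Hd' None (or_introl eq_refl)) as [H2 _]. simpl in H2.
    destruct (Rlt_dec d' 0); [|lra]. apply H2 in r; lra. }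
  exists d'; split; auto.
  assert (F : forall a c, (1 <= a <= m)%nat -> (c <= K)%nat ->
     (val v a + d < INR c <-> val w a + d' < INR c) /\ (val v a + d <= INR c <-> val w a + d' <= INR c)).
  { intros a c Ha Hc. destruct (Rle_dec (val v a) (INR c)) as [Hr|Hr].
    - destruct (Hd' (Some (a,c)) (HL2 a c Ha Hc Hr)) as [X Y]. simpl in X, Y.
      split; split; intro.
      + assert (d < INR c - val v a) by lra. apply X in H0; lra.
      + assert (d' < INR c - val w a) by lra. apply X in H0; lra.
      + destruct (Rlt_dec (INR c - val w a) d'); [apply Y in r; lra|lra].
      + destruct (Rlt_dec (INR c - val v a) d); [apply Y in r; lra|lra].
    - assert (~ val w a <= INR c) by (rewrite <- (E2 _ _ _ He a c Ha Hc); auto).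
      split; split; intro; lra. }
  intros t Ht. pose proof (tests_inv K t Ht) as Hi.
  destruct t as [a c|a c|a b c|a b c]; simpl in Hi |- *.
  - rewrite !val_delay by tauto. apply F; tauto.
  - rewrite !val_delay by tauto. apply F; tauto.
  - destruct Hi as [Ha [Hb Hc]]. rewrite !val_delay by tauto.
    destruct (F a K Ha (le_n _)) as [_ Fa]. destruct (F b K Hb (le_n _)) as [_ Fb].
    pose proof (E3 _ _ _ He a b c Ha Hb Hc) as H3.
    split; intros [X [Y Z]].
    + assert (val v a <= INR K /\ val v b <= INR K /\ val v a - val v b < INR c) as W by (repeat split; lra).
      apply H3 in W. repeat split; try tauto; lra.
    + assert (val w a <= INR K /\ val w b <= INR K /\ val w a - val w b < INR c) as W by (repeat split; lra).
      apply H3 in W. repeat split; try tauto; lra.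
  - destruct Hi as [Ha [Hb Hc]]. rewrite !val_delay by tauto.
    destruct (F a K Ha (le_n _)) as [_ Fa]. destruct (F b K Hb (le_n _)) as [_ Fb].
    pose proof (E4 _ _ _ He a b c Ha Hb Hc) as H3.
    split; intros [X [Y Z]].
    + assert (val v a <= INR K /\ val v b <= INR K /\ val v a - val v b <= INR c) as W by (repeat split; lra).
      apply H3 in W. repeat split; try tauto; lra.
    + assert (val w a <= INR K /\ val w b <= INR K /\ val w a - val w b <= INR c) as W by (repeat split; lra).
      apply H3 in W. repeat split; try tauto; lra.
Qed.
End S.

End Part3.
Import Part3.

Module Part4.

Section S.
Context {m : nat} (K : nat).

Lemma val_reset (R : clock m -> bool) v a (H : (a <= m)%nat) :
  val (reset R v) a = if R (exist _ a H) then 0 else val v a.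
Proof. rewrite !(val_ex _ _ H). reflexivity. Qed.

Lemma iff_and3 (A B C A' B' C' : Prop) :
  (A <-> A') -> (B <-> B') -> (C <-> C') -> (A /\ B /\ C <-> A' /\ B' /\ C').
Proof. tauto. Qed.

Lemma reset_sim (R : clock m -> bool) v w :
  equiv K v w -> Part2.nonneg v -> equiv K (reset R v) (reset R w).
Proof.
  intros He Hn. pose proof (equiv_nonneg K v w He Hn) as Hnw.
  assert (HK0 : 0 <= INR K) by apply pos_INR.
  intros t Ht. pose proof (tests_inv K t Ht) as Hi.
  destruct t as [a c|a c|a b c|a b c]; simpl in Hi |- *.
  - destruct Hi as [Ha Hc]. rewrite !(val_reset R _ a (proj2 Ha)).
    destruct (R _); [tauto|apply (Part2.E1 K v w); auto].
  - destruct Hi as [Ha Hc]. rewrite !(val_reset R _ a (proj2 Ha)).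
    destruct (R _); [tauto|apply (E2 K v w); auto].
  - destruct Hi as [Ha [Hb Hc]]. rewrite !(val_reset R _ a (proj2 Ha)), !(val_reset R _ b (proj2 Hb)).
    pose proof (Hn b Hb). pose proof (Hnw b Hb).
    destruct (R (exist _ a _)), (R (exist _ b _)).
    + tauto.
    + apply iff_and3; [tauto|apply (E2 K v w); auto|].
      destruct c as [|c].
      * simpl. pose proof (E2 K v w He b 0 Hb ltac:(lia)) as X; simpl in X.
        split; intro; destruct (Rle_dec (val w b) 0), (Rle_dec (val v b) 0); try lra; tauto.
      * pose proof (lt_0_INR (S c) ltac:(lia)). split; intro; lra.
    + apply iff_and3; [apply (E2 K v w); auto|tauto|].
      rewrite !Rminus_0_r. apply (Part2.E1 K v w); auto.
    + apply (E3 K v w); auto.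
  - destruct Hi as [Ha [Hb Hc]]. rewrite !(val_reset R _ a (proj2 Ha)), !(val_reset R _ b (proj2 Hb)).
    pose proof (Hn b Hb). pose proof (Hnw b Hb). pose proof (pos_INR c).
    destruct (R (exist _ a _)), (R (exist _ b _)).
    + tauto.
    + apply iff_and3; [tauto|apply (E2 K v w); auto|]. split; intro; lra.
    + apply iff_and3; [apply (E2 K v w); auto|tauto|].
      rewrite !Rminus_0_r. apply (E2 K v w); auto.
    + apply (E4 K v w); auto.
Qed.

Definition small_trans (t : transition m) : Prop :=
  Forall (fun at0 => (a_const at0 <= K)%nat) (t_guard t).

Lemma guard_sim u u' (g : guard m) :
  equiv K u u' -> Forall (fun a => is_ref (a_clock a) = false) g ->
  Forall (fun at0 => (a_const at0 <= K)%nat) g ->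
  sat_guard u g -> sat_guard u' g.
Proof.
  intros He H1 H2 H. unfold sat_guard in *. rewrite Forall_forall in *.
  intros at0 Hin. specialize (H1 _ Hin); specialize (H2 _ Hin); specialize (H _ Hin).
  unfold sat_atom in *. destruct at0 as [[a Ha] op c]; simpl in *.
  rewrite val_clock in H |- *. simpl in *.
  unfold is_ref in H1; simpl in H1. assert (Ha' : (1 <= a <= m)%nat) by (destruct a; simpl in H1; [discriminate|lia]).
  pose proof (Part2.E1 K u u' He a c Ha' H2) as X1.
  pose proof (E2 K u u' He a c Ha' H2) as X2.
  destruct op; simpl in *.
  - tauto.
  - tauto.
  - assert (val u a <= INR c) by lra. assert (~ val u a < INR c) by lra.
    assert (val u' a <= INR c) by tauto. assert (~ val u' a < INR c) by tauto. lra.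
  - assert (~ val u a < INR c) by lra. assert (~ val u' a < INR c) by tauto. lra.
  - assert (~ val u a <= INR c) by lra. assert (~ val u' a <= INR c) by tauto. lra.
Qed.

Lemma nonneg_step (v : valuation m) t d v1 : Part2.nonneg v -> step v t d v1 -> Part2.nonneg v1.
Proof.
  intros Hn [Hd [_ ->]] a Ha. rewrite (val_reset _ _ a (proj2 Ha)).
  destruct (t_reset t _); [lra|]. rewrite val_delay by auto. pose proof (Hn a Ha); lra.
Qed.

Lemma step_sim v w t d v1 :
  equiv K v w -> Part2.nonneg v -> wf_trans t -> small_trans t -> step v t d v1 ->
  exists d' w1, step w t d' w1 /\ equiv K v1 w1.
Proof.
  intros He Hn [Hwf _] Hs [Hd [Hg ->]].
  destruct (delay_sim K v w d He Hd) as [d' [Hd' He']].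
  exists d', (reset (t_reset t) (delay w d')). split.
  - split; [auto|split; [|reflexivity]]. eapply guard_sim; eauto.
  - apply reset_sim; auto. intros a Ha. rewrite val_delay by auto. pose proof (Hn a Ha); lra.
Qed.

Lemma exec_sim v w s d v1 :
  equiv K v w -> Part2.nonneg v -> Forall wf_trans s -> Forall small_trans s -> exec v s d v1 ->
  exists d' w1, exec w s d' w1 /\ equiv K v1 w1 /\ Part2.nonneg v1.
Proof.
  intros He Hn Hwf Hs H. revert w He Hn Hwf Hs. induction H; intros w He Hn Hwf Hs.
  - exists 0, w; split; [constructor|split; auto].
  - inversion Hwf; inversion Hs; subst.
    destruct (step_sim v w t d v1 He Hn H3 H7 H) as [d1 [w1 [Hst He1]]].
    destruct (IHexec w1 He1 (nonneg_step _ _ _ _ Hn H) H4 H8) as [d2 [w2 [Hex [He2 Hn2]]]].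
    exists (d1 + d2), w2; split; [econstructor; eauto|split; auto].
Qed.
End S.

End Part4.
Import Part4.

Module Part5.

Section S.
Context {m : nat}.

Fixpoint ReachN (s : list (transition m)) (k : nat) (u w : valuation m) : Prop :=
  match k with
  | O => u = w
  | S k => exists u1 d, exec u s d u1 /\ ReachN s k u1 w
  end.

Lemma reach_sim K s k v w v' :
  Forall wf_trans s -> Forall (small_trans K) s ->
  equiv K v w -> Part2.nonneg v -> ReachN s k v v' -> exists w', ReachN s k w w' /\ equiv K v' w'.
Proof.
  intros Hwf Hs. revert v w. induction k as [|k IH]; intros v w He Hn H; simpl in H.
  - subst; exists w; split; simpl; auto.
  - destruct H as [u1 [d [Hx Hr]]].
    destruct (exec_sim K v w s d u1 He Hn Hwf Hs Hx) as [d' [w1 [Hx' [He1 Hn1]]]].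
    destruct (IH u1 w1 He1 Hn1 Hr) as [w' [Hr' He']].
    exists w'; split; auto. simpl; eauto.
Qed.

Lemma nonneg_exec (v : valuation m) s d v1 : Part2.nonneg v -> exec v s d v1 -> Part2.nonneg v1.
Proof. intros Hn H; induction H; auto. apply IHexec. eapply nonneg_step; eauto. Qed.

Lemma chain s n (v0 v' : valuation m) d :
  exec v0 (seq_pow s n) d v' ->
  exists f : nat -> valuation m, f O = v0 /\ forall i, (i < n)%nat -> exists d, exec (f i) s d (f (S i)).
Proof.
  revert v0 d. induction n as [|n IH]; intros v0 d H.
  - exists (fun _ => v0); split; auto; intros; lia.
  - change (seq_pow s (S n)) with (s ++ seq_pow s n) in H.
    destruct (exec_app _ _ _ _ _ H) as [d1 [d2 [u [H1 H2]]]].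
    destruct (IH u d2 H2) as [f [Hf0 Hf]].
    exists (fun i => match i with O => v0 | S i => f i end). split; auto.
    intros [|i] Hi; [subst; eauto|]. apply Hf; lia.
Qed.

Lemma chain_reach s n (f : nat -> valuation m) :
  (forall i, (i < n)%nat -> exists d, exec (f i) s d (f (S i))) ->
  forall k i, (i + k <= n)%nat -> ReachN s k (f i) (f (i + k)%nat).
Proof.
  intros Hf k. induction k as [|k IH]; intros i Hi; simpl.
  - rewrite Nat.add_0_r; reflexivity.
  - destruct (Hf i ltac:(lia)) as [d Hd]. exists (f (S i)), d; split; auto.
    replace (i + S k)%nat with (S i + k)%nat by lia. apply IH; lia.
Qed.

Lemma K_exists (s : list (transition m)) : exists K, Forall (small_trans K) s.
Proof.
  induction s as [|t s [K HK]]; [exists O; constructor|].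
  assert (exists K', forall at0, In at0 (t_guard t) -> (a_const at0 <= K')%nat) as [K' HK'].
  { induction (t_guard t) as [|a g [K1 H1]]; [exists O; intros _ []|].
    exists (max (a_const a) K1). intros at0 [<-|Hin]; [lia|]. specialize (H1 _ Hin); lia. }
  exists (max K K'). constructor.
  - unfold small_trans. apply Forall_forall. intros at0 Hin. specialize (HK' _ Hin); lia.
  - eapply Forall_impl; [|exact HK]. intros t' Ht'. unfold small_trans in *.
    eapply Forall_impl; [|exact Ht']. simpl; intros; lia.
Qed.

End S.


End Part5.
Import Part5.

Theorem lemma1 (m : nat) (sigma : list (transition m))
  (Hwf : Forall wf_trans sigma) :
  omega_iterable sigma <->
  (forall n : nat, (1 <= n)%nat -> exists v0 : valuation m, executable_from (seq_pow sigma n) v0).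
Proof.
  split.
  - intros [v0 [Hv [vs [ds [H0 Hx]]]]] n _. exists v0. split; auto.
    assert (forall n i, exists d, exec (vs i) (seq_pow sigma n) d (vs (i + n)%nat)) as G.
    { induction n0 as [|n0 IH]; intros i.
      - rewrite Nat.add_0_r. exists 0; constructor.
      - change (seq_pow sigma (S n0)) with (sigma ++ seq_pow sigma n0).
        destruct (IH (S i)) as [d Hd]. replace (i + S n0)%nat with (S i + n0)%nat by lia.
        eapply exec_app2; eauto. }
    destruct (G n O) as [d Hd]. rewrite H0 in Hd. simpl in Hd. eauto.
  - intros H. destruct (K_exists sigma) as [K HK].
    set (D := allb (length (tests (m:=m) K))).
    destruct (H (S (length D)) ltac:(lia)) as [v0 [Hv [d [v' Hx]]]].
    destruct (chain sigma _ v0 v' d Hx) as [f [Hf0 Hf]].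
    destruct (php D (fun i => alpha K (f i)) (fun i _ => alpha_in K (f i))) as [i [j [Hij [Hj Ha]]]].
    assert (Hn0 : Part2.nonneg v0).
    { intros a Ha'. rewrite (val_ex v0 a (proj2 Ha')). apply (proj1 Hv). }
    assert (Hnf : forall i, (i <= S (length D))%nat -> Part2.nonneg (f i)).
    { intros i0 Hi0. pose proof (chain_reach sigma _ f Hf i0 O ltac:(lia)) as R.
      clear -R Hn0 Hf0. simpl in R. revert R. generalize (f i0). intros u R.
      assert (forall k (v u : valuation m), Part2.nonneg v -> ReachN sigma k v u -> Part2.nonneg u).
      { induction k as [|k IH]; intros v1 u1 Hn Hr; simpl in Hr; [subst; auto|].
        destruct Hr as [u2 [dd [Hx Hr]]]. eapply IH; [|eauto]. eapply nonneg_exec; eauto. }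
      apply (H i0 v0); [auto|]. rewrite <- Hf0; exact R. }
    set (Good := fun u : valuation m => exists r w, ReachN sigma r u w /\ equiv K (f i) w).
    assert (HG : forall u, Good u -> exists u' dd, exec u sigma dd u' /\ Good u').
    { intros u [r [w [Hr Hw]]]. destruct r as [|r].
      - simpl in Hr; subst w.
        assert (Rij : ReachN sigma (j - i) (f i) (f j)).
        { replace j with (i + (j - i))%nat at 2 by lia. apply chain_reach with (n := S (length D)); auto; lia. }
        destruct (reach_sim K sigma (j - i) (f i) u (f j) Hwf HK Hw (Hnf i ltac:(lia)) Rij) as [w' [Hr' He']].
        destruct (j - i)%nat as [|k] eqn:E; [lia|].
        destruct Hr' as [u1 [dd [Hx1 Hr1]]]. exists u1, dd; split; auto.
        exists k, w'; split; auto. eapply equiv_trans; [apply alpha_equiv; exact Ha|exact He'].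
      - destruct Hr as [u1 [dd [Hx1 Hr1]]]. exists u1, dd; split; auto. exists r, w; auto. }
    assert (HF : forall u, exists p : valuation m * R, Good u -> exec u sigma (snd p) (fst p) /\ Good (fst p)).
    { intros u. destruct (classic (Good u)) as [Hg|Hg].
      - destruct (HG u Hg) as [u' [dd [A B]]]. exists (u', dd); auto.
      - exists (u, 0); intro; contradiction. }
    set (F := fun u => proj1_sig (constructive_indefinite_description _ (HF u))).
    assert (HFs : forall u, Good u -> exec u sigma (snd (F u)) (fst (F u)) /\ Good (fst (F u))).
    { intros u; unfold F; destruct (constructive_indefinite_description _ (HF u)); simpl; auto. }
    set (vs := fix vs (k : nat) : valuation m := match k with O => v0 | S k => fst (F (vs k)) end).
    set (ds := fun k : nat => match k with O => 0 | S k => snd (F (vs k)) end).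
    assert (Hgood : forall k, Good (vs k)).
    { induction k as [|k IH]; simpl.
      - exists i, (f i). split; [|apply equiv_refl]. rewrite <- Hf0.
        apply (chain_reach sigma _ f Hf i O); lia.
      - apply HFs; auto. }
    exists v0. split; auto. exists vs, ds. split; [reflexivity|].
    intros k. apply (HFs (vs k) (Hgood k)).
Qed.
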